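(* Let $\mathcal{A}:\mathbb{C}^{m\times n}\to\mathbb{C}^p$ be linear with rank-restricted isometry constant $\delta_r(\mathcal{A})$, let $\Psi\subset\mathbb{O}$ be a set of atoms with $|\Psi|\le r$, and let $\mathcal{P}:\mathbb{C}^{m\times n}\to\mathbb{C}^{m\times n}$ be an orthogonal projection operator that commutes with $\mathcal{P}_\Psi$. Then $$(1-\delta_r(\mathcal{A}))\|\mathcal{P}\mathcal{P}_\Psi X\|_F\le\|\mathcal{P}\mathcal{P}_\Psi\mathcal{A}^*\mathcal{A}\mathcal{P}\mathcal{P}_\Psi X\|_F\quad\text{for all }X\in\mathbb{C}^{m\times n}.$$
   Context: $\mathbb{C}^p$ has inner product $\langle x,y\rangle=y^Hx$ and norm $\|\cdot\|_2$; $\mathbb{C}^{m\times n}$ has inner product $\langle X,Y\rangle=\mathrm{tr}(Y^HX)$ and Frobenius norm $\|\cdot\|_F$; $\mathcal{A}^*$ is the adjoint of $\mathcal{A}$. $\delta_r(\mathcal{A})$ is the smallest $\delta\ge0$ such that $(1-\delta)\|X\|_F^2\le\|\mathcal{A}X\|_2^2\le(1+\delta)\|X\|_F^2$ for all $X$ with $\mathrm{rank}(X)\le r$. The set of atoms $\mathbb{O}$ is a set of unit-Frobenius-norm rank-one matrices in $\mathbb{C}^{m\times n}$ such that every nonzero rank-one matrix is a scalar multiple of exactly one element of $\mathbb{O}$. For $\Psi\subset\mathbb{O}$, $\mathcal{P}_\Psi$ is the orthogonal projection of $\mathbb{C}^{m\times n}$ onto $\mathrm{span}(\Psi)$. *)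

(* Defs.v *)
From HB Require Import structures.
From mathcomp Require Import all_boot all_order all_algebra.
Set Implicit Arguments. Unset Strict Implicit. Unset Printing Implicit Defensive.
Import Order.TTheory GRing.Theory Num.Theory.
Local Open Scope ring_scope.

(* Complex scalars: an arbitrary numClosedFieldType C (e.g. algC, or
   complex R for a real closed field R); conjugation is z^*. *)

Definition vdot (C : numClosedFieldType) (p : nat) (x y : 'cV[C]_p) : C :=
  \sum_(i < p) x i 0 * (y i 0)^*.

Definition vnorm (C : numClosedFieldType) (p : nat) (x : 'cV[C]_p) : C :=
  sqrtC (\sum_(i < p) `|x i 0| ^+ 2).

Definition fdot (C : numClosedFieldType) (m n : nat) (X Y : 'M[C]_(m, n)) : C :=
  \sum_(i < m) \sum_(j < n) X i j * (Y i j)^*.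

Definition fnorm (C : numClosedFieldType) (m n : nat) (X : 'M[C]_(m, n)) : C :=
  sqrtC (\sum_(i < m) \sum_(j < n) `|X i j| ^+ 2).

Definition is_adjoint (C : numClosedFieldType) (m n p : nat)
  (A : 'M[C]_(m, n) -> 'cV[C]_p) (Astar : 'cV[C]_p -> 'M[C]_(m, n)) : Prop :=
  forall X y, vdot (A X) y = fdot X (Astar y).

Definition rip_bound (C : numClosedFieldType) (m n p r : nat)
  (A : 'M[C]_(m, n) -> 'cV[C]_p) (d : C) : Prop :=
  forall X : 'M[C]_(m, n), (\rank X <= r)%N ->
    (1 - d) * fnorm X ^+ 2 <= vnorm (A X) ^+ 2 /\
    vnorm (A X) ^+ 2 <= (1 + d) * fnorm X ^+ 2.

Definition is_RIC (C : numClosedFieldType) (m n p r : nat)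
  (A : 'M[C]_(m, n) -> 'cV[C]_p) (d : C) : Prop :=
  [/\ 0 <= d, rip_bound r A d &
      forall d', 0 <= d' -> rip_bound r A d' -> d <= d'].

Definition atom_set (C : numClosedFieldType) (m n : nat)
  (O : 'M[C]_(m, n) -> Prop) : Prop :=
  (forall a, O a -> \rank a = 1%N /\ fnorm a = 1) /\
  (forall X : 'M[C]_(m, n), \rank X = 1%N ->
     exists a, [/\ O a, (exists c : C, X = c *: a) &
       forall b, O b -> (exists c : C, X = c *: b) -> b = a]).

Definition orth_proj_onto (C : numClosedFieldType) (m n : nat)
  (U : {vspace 'M[C]_(m, n)}) (P : 'M[C]_(m, n) -> 'M[C]_(m, n)) : Prop :=
  forall X, P X \in U /\ (forall Y, Y \in U -> fdot (X - P X) Y = 0).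

Definition orth_proj (C : numClosedFieldType) (m n : nat)
  (P : 'M[C]_(m, n) -> 'M[C]_(m, n)) : Prop :=
  [/\ linear P, forall X, P (P X) = P X &
      forall X Y, fdot (P X) Y = fdot X (P Y)].

(* Main.v *)
Require Import Defs.
From HB Require Import structures.
From mathcomp Require Import all_boot all_order all_algebra.
From mathcomp Require Import ring.
Import Order.TTheory GRing.Theory Num.Theory.
Local Open Scope ring_scope.

Section Helpers.
Set Implicit Arguments. Unset Strict Implicit.
Variables (C : numClosedFieldType) (m n : nat).
Implicit Types (X Y Z : 'M[C]_(m, n)).

Lemma fdotDl X Y Z : fdot (X + Y) Z = fdot X Z + fdot Y Z.
Proof.
rewrite /fdot -big_split /=; apply: eq_bigr => i _.
rewrite -big_split /=; apply: eq_bigr => j _; by rewrite mxE mulrDl.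
Qed.

Lemma fdotZl a X Z : fdot (a *: X) Z = a * fdot X Z.
Proof.
rewrite /fdot mulr_sumr; apply: eq_bigr => i _.
rewrite mulr_sumr; apply: eq_bigr => j _; by rewrite mxE mulrA.
Qed.

Lemma fdotNl X Z : fdot (- X) Z = - fdot X Z.
Proof. by rewrite -scaleN1r fdotZl mulN1r. Qed.

Lemma fdotBl X Y Z : fdot (X - Y) Z = fdot X Z - fdot Y Z.
Proof. by rewrite fdotDl fdotNl. Qed.

Lemma fdotC X Y : fdot Y X = (fdot X Y)^*.
Proof.
rewrite /fdot rmorph_sum; apply: eq_bigr => i _.
rewrite rmorph_sum; apply: eq_bigr => j _.
by rewrite rmorphM /= conjCK mulrC.
Qed.

Lemma fdotBr X Y Z : fdot X (Y - Z) = fdot X Y - fdot X Z.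
Proof. by rewrite fdotC fdotBl rmorphB /= -!fdotC. Qed.

Lemma fdotZr a X Z : fdot X (a *: Z) = a^* * fdot X Z.
Proof. by rewrite fdotC fdotZl rmorphM /= -fdotC. Qed.

Lemma fdotxx X : fdot X X = fnorm X ^+ 2.
Proof.
rewrite /fnorm sqrtCK /fdot; apply: eq_bigr => i _; apply: eq_bigr => j _.
by rewrite normCK.
Qed.

Lemma fdot_ge0 X : 0 <= fdot X X.
Proof.
rewrite /fdot; apply: sumr_ge0 => i _; apply: sumr_ge0 => j _.
by rewrite -normCK exprn_ge0.
Qed.

Lemma fdot_eq0 X : fdot X X = 0 -> X = 0.
Proof.
rewrite /fdot => H; apply/matrixP => i j; rewrite mxE.
have H1 : forall i, \sum_(j < n) X i j * (X i j)^* = 0.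
  move=> i0; apply/eqP; rewrite eq_le; apply/andP; split; last first.
    by apply: sumr_ge0 => k _; rewrite -normCK exprn_ge0.
  have := H; move/eqP; rewrite psumr_eq0; last first.
    by move=> k _; apply: sumr_ge0 => l _; rewrite -normCK exprn_ge0.
  by move/allP => /(_ i0 (mem_index_enum _)) /= /eqP ->.
have := H1 i; move/eqP; rewrite psumr_eq0; last first.
  by move=> k _; rewrite -normCK exprn_ge0.
move/allP => /(_ j (mem_index_enum _)) /=.
by rewrite -normCK expf_eq0 /= normr_eq0 => /eqP.
Qed.

Lemma fnorm_ge0 X : 0 <= fnorm X.
Proof. by rewrite /fnorm sqrtC_ge0; apply: sumr_ge0 => i _; apply: sumr_ge0 => j _; rewrite exprn_ge0. Qed.

Lemma vdotxx p (x : 'cV[C]_p) : vdot x x = vnorm x ^+ 2.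
Proof. by rewrite /vnorm sqrtCK /vdot; apply: eq_bigr => i _; rewrite normCK. Qed.

Lemma vnorm2_ge0 p (x : 'cV[C]_p) : 0 <= vnorm x ^+ 2.
Proof. by rewrite /vnorm sqrtCK; apply: sumr_ge0 => i _; rewrite exprn_ge0. Qed.

Lemma rank_span (s : seq 'M[C]_(m, n)) Y :
  (forall a, a \in s -> \rank a = 1%N) -> Y \in <<s>>%VS -> (\rank Y <= size s)%N.
Proof.
elim: s Y => [|a s IH] Y Hs.
  by rewrite span_nil memv0 => /eqP ->; rewrite mxrank0.
rewrite span_cons => /memv_addP [u /vlineP [k ->] [v Hv ->]].
apply: leq_trans (mxrank_add _ _) _.
rewrite /= -add1n leq_add //.
  by rewrite -(Hs a (mem_head _ _)) mxrank_scale.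
by apply: IH => // b Hb; apply: Hs; rewrite inE Hb orbT.
Qed.
End Helpers.

Theorem proposition4 (C : numClosedFieldType) (m n p r : nat)
  (A : {linear 'M[C]_(m, n) -> 'cV[C]_p}) (Astar : 'cV[C]_p -> 'M[C]_(m, n))
  (d : C) (O : 'M[C]_(m, n) -> Prop) (Psi : seq 'M[C]_(m, n))
  (PPsi P : 'M[C]_(m, n) -> 'M[C]_(m, n)) :
  is_adjoint A Astar ->
  is_RIC r A d ->
  atom_set O ->
  uniq Psi -> (forall a, a \in Psi -> O a) -> (size Psi <= r)%N ->
  orth_proj_onto <<Psi>>%VS PPsi ->
  orth_proj P ->
  (forall X, P (PPsi X) = PPsi (P X)) ->
  forall X : 'M[C]_(m, n),
    (1 - d) * fnorm (P (PPsi X)) <= fnorm (P (PPsi (Astar (A (P (PPsi X)))))).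
Proof.
move=> Hadj [d0 Hrip _] [HO _] _ HPsi Hsize Hproj [_ Pid Psa] Hcomm X.
have PPsi_in Z : PPsi Z \in <<Psi>>%VS by case: (Hproj Z).
have PPsi_id Z : Z \in <<Psi>>%VS -> PPsi Z = Z.
  move=> HZ; apply/eqP; rewrite eq_sym -subr_eq0; apply/eqP.
  apply: fdot_eq0; case: (Hproj Z) => _ /(_ (Z - PPsi Z)); apply.
  by rewrite memvB.
have PPsi_sa a b : fdot (PPsi a) b = fdot a (PPsi b).
  have h1 : fdot a (PPsi b) = fdot (PPsi a) (PPsi b).
    case: (Hproj a) => _ /(_ (PPsi b) (PPsi_in b)).
    by rewrite fdotBl => /eqP; rewrite subr_eq0 => /eqP.
  have h2 : fdot b (PPsi a) = fdot (PPsi b) (PPsi a).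
    case: (Hproj b) => _ /(_ (PPsi a) (PPsi_in a)).
    by rewrite fdotBl => /eqP; rewrite subr_eq0 => /eqP.
  by rewrite h1 (fdotC b) h2 -fdotC.
set Y := P (PPsi X).
have YU : Y \in <<Psi>>%VS by rewrite /Y Hcomm.
have PY : P Y = Y by rewrite /Y Pid.
have PPY : PPsi Y = Y by apply: PPsi_id.
set W := P (PPsi (Astar (A Y))).
set s := vnorm (A Y) ^+ 2.
have sW : s = fdot Y W.
  rewrite /s -vdotxx Hadj /W -Psa PY -PPsi_sa PPY //.
have rkY : (\rank Y <= r)%N.
  apply: leq_trans Hsize; apply: rank_span YU => a /HPsi /HO [] //.
have [Hs _] := Hrip Y rkY; rewrite -/s in Hs.
set c := 1 - d.
have creal : c \is Num.real by rewrite rpredB // ?ger0_real.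
have s0 : 0 <= s by apply: vnorm2_ge0.
have y0 := fnorm_ge0 Y; have w0 := fnorm_ge0 W.
have [c0|c0] := real_leP creal (real0 C).
  exact: le_trans (mulr_le0_ge0 c0 y0) w0.
have c0' := ltW c0.
have key : 0 <= c ^+ 2 * fnorm Y ^+ 2 - c * s - c * s + fnorm W ^+ 2.
  have := fdot_ge0 (c *: Y - W).
  rewrite !fdotBl !fdotZl. rewrite !fdotBr !fdotZr conj_Creal // -sW (fdotC Y W) -sW.
  rewrite (conj_Creal (ger0_real s0)) !fdotxx => H; apply: le_trans H _.
  by rewrite le_eqVlt; apply/orP; left; apply/eqP; ring.
have cs : c * (c * fnorm Y ^+ 2) <= c * s by rewrite ler_wpM2l.
have : (c * fnorm Y) ^+ 2 <= fnorm W ^+ 2.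
  rewrite -subr_ge0; apply: le_trans key _; rewrite -subr_ge0.
  have -> : fnorm W ^+ 2 - (c * fnorm Y) ^+ 2 -
      (c ^+ 2 * fnorm Y ^+ 2 - c * s - c * s + fnorm W ^+ 2) =
      (c * s - c * (c * fnorm Y ^+ 2)) + (c * s - c * (c * fnorm Y ^+ 2)) by ring.
  by rewrite addr_ge0 // subr_ge0.
by rewrite ler_sqr // nnegrE ?mulr_ge0.
Qed.
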